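(* Let $\mathcal H$ be a finite index set, let $n$ and $k$ be integers, and for each $j\in\mathcal H$ let $\mathcal X_j\subseteq\mathbb R^m$ be closed and convex, with $\bigcap_{j\in\mathcal H}\mathcal X_j=\{x^*\}$. Suppose $\mathcal H$ is $k$-redundant. Suppose $\mu>0$ is such that for every $x\in\mathbb R^m$ and every $\mathcal S\subseteq\mathcal H$ with $|\mathcal S|\ge n-k$, $$\max_{i\in\mathcal S}\mathrm{dist}(x,\mathcal X_i)\ge\mu\,\mathrm{dist}\Big(x,\bigcap_{i\in\mathcal S}\mathcal X_i\Big).$$ Let $x_j\in\mathcal X_j$ be arbitrary for each $j\in\mathcal H$, and let $\mathcal S\subseteq\mathcal H$ with $|\mathcal S|\ge n-k$. Then $0<\mu\le 1$, and for every $i\in\mathcal H$, $$\max_{j\in\mathcal S}\|x_i-x_j\|^2\ge\mu^2\|x_i-x^*\|^2.$$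
   Context: $\mathrm{dist}(x,\mathcal C)=\|x-\mathrm P_{\mathcal C}[x]\|$, where $\mathrm P_{\mathcal C}$ is the Euclidean projection onto a closed convex set $\mathcal C$. $\mathcal H$ is $k$-redundant if for every $\mathcal S\subseteq\mathcal H$ with $|\mathcal S|\ge n-k$ we have $\bigcap_{i\in\mathcal S}\mathcal X_i=\bigcap_{i\in\mathcal H}\mathcal X_i$. (In the paper, $n$ is the total number of agents and $\mathcal H$ is the set of normal agents.) *)

(* Defs.v *)
From HB Require Import structures.
From mathcomp Require Import all_boot all_order all_algebra.
From mathcomp Require Import all_classical all_reals all_analysis.
Set Implicit Arguments. Unset Strict Implicit. Unset Printing Implicit Defensive.
Import Order.TTheory GRing.Theory Num.Theory.
Import numFieldNormedType.Exports.
Local Open Scope classical_set_scope.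
Local Open Scope ring_scope.

(* R^m is represented by row vectors 'rV[R]_m,
   equipped with the EUCLIDEAN norm defined below (the library norm on
   matrices is the max norm, so we do not use it for distances). *)

Definition enorm (R : realType) (m : nat) (x : 'rV[R]_m) : R :=
  Num.sqrt (\sum_(i < m) (x ord0 i) ^+ 2).

Definition dist (R : realType) (m : nat) (x : 'rV[R]_m) (C : set 'rV[R]_m) : R :=
  inf [set enorm (x - y) | y in C].

Definition closed_convex (R : realType) (m : nat) (C : set 'rV[R]_m) : Prop :=
  closed C /\ convex_set (C : set (convex_lmodType 'rV[R]_m)).

Definition capS (R : realType) (m : nat) (I : finType) (X : I -> set 'rV[R]_m)
  (S : {set I}) : set 'rV[R]_m :=
  \bigcap_(i in [set i | i \in S]) X i.

Definition k_redundant (R : realType) (m : nat) (I : finType)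
  (X : I -> set 'rV[R]_m) (n k : int) : Prop :=
  forall S : {set I}, n - k <= (#|S|%:Z) -> capS X S = capS X [set: I]%SET.

(* maximum over a finite subset of nonnegative quantities *)
Definition maxS (R : realType) (I : finType) (S : {set I}) (f : I -> R) : R :=
  \big[Num.max/0]_(i in S) f i.

(* Main.v *)
Require Import Defs.
From HB Require Import structures.
From mathcomp Require Import all_boot all_order all_algebra.
From mathcomp Require Import all_classical all_reals all_analysis.
Import Order.TTheory GRing.Theory Num.Theory.
Import numFieldNormedType.Exports.
Local Open Scope classical_set_scope.
Local Open Scope ring_scope.

Section H.
Variable R : realType.

Lemma maxS_le (I : finType) (S : {set I}) (f : I -> R) M :
  0 <= M -> (forall j, j \in S -> f j <= M) -> maxS S f <= M.
Proof.
move=> M0 hf; rewrite /maxS; elim/big_rec: _ => // i x iS hx.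
by rewrite ge_max hx hf.
Qed.

Lemma le_maxS (I : finType) (S : {set I}) (f : I -> R) j :
  j \in S -> f j <= maxS S f.
Proof. by move=> jS; rewrite /maxS (bigD1 j) //= le_max lexx. Qed.

Lemma maxS_ge0 (I : finType) (S : {set I}) (f : I -> R) : 0 <= maxS S f.
Proof. rewrite /maxS; elim/big_rec: _ => // i x iS hx; by rewrite le_max hx orbT. Qed.

Lemma enorm_ge0 m (v : 'rV[R]_m) : 0 <= enorm v.
Proof. exact: sqrtr_ge0. Qed.

Lemma dist_le m (z y : 'rV[R]_m) (C : set 'rV[R]_m) : C y -> dist z C <= enorm (z - y).
Proof.
move=> Cy; rewrite /dist; apply: ge_inf; last by exists y.
by exists 0 => _ [w _ <-]; apply: enorm_ge0.
Qed.

Lemma dist1 m (z y : 'rV[R]_m) : dist z [set y] = enorm (z - y).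
Proof. by rewrite /dist image_set1 inf1. Qed.

End H.

Theorem lemma1 (R : realType) (m : nat) (I : finType) (n k : int)
  (X : I -> set 'rV[R]_m) (xstar : 'rV[R]_m) (mu : R)
  (hm : (0 < m)%N)
  (hX : forall j, closed_convex (X j))
  (hcap : capS X [set: I]%SET = [set xstar])
  (hred : k_redundant X n k)
  (hmu0 : 0 < mu)
  (hmu : forall (x : 'rV[R]_m) (S : {set I}), n - k <= (#|S|%:Z) ->
     maxS S (fun i => dist x (X i)) >= mu * dist x (capS X S))
  (x : I -> 'rV[R]_m) (hx : forall j, X j (x j))
  (S : {set I}) (hS : n - k <= (#|S|%:Z)) :
  (0 < mu <= 1) /\
  forall i : I, maxS S (fun j => enorm (x i - x j) ^+ 2) >= mu ^+ 2 * enorm (x i - xstar) ^+ 2.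
Proof.
have capE : capS X S = [set xstar] by rewrite hred.
have xsX : forall j, X j xstar.
  move=> j; have : capS X [set: I]%SET xstar by rewrite hcap.
  by apply; rewrite /= inE.
have key : forall z, mu * enorm (z - xstar) <= maxS S (fun j => dist z (X j)).
  by move=> z; rewrite -dist1 -capE; apply: hmu.
split.
  rewrite hmu0 /=.
  set z := xstar + const_mx 1.
  have ez : enorm (z - xstar) = Num.sqrt (m%:R).
    rewrite /z addrAC subrr add0r /enorm.
    under eq_bigr do rewrite mxE expr1n.
    by rewrite sumr_const card_ord.
  have pos : 0 < enorm (z - xstar) by rewrite ez sqrtr_gt0 ltr0n.
  have := key z.
  have : maxS S (fun j => dist z (X j)) <= enorm (z - xstar).
    apply: maxS_le; first exact: ltW.
    by move=> j _; apply: dist_le.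
  move=> h1 h2.
  have : mu * enorm (z - xstar) <= 1 * enorm (z - xstar) by rewrite mul1r; exact: le_trans h2 h1.
  by rewrite ler_pM2r.
move=> i.
set M := Num.sqrt (maxS S (fun j => enorm (x i - x j) ^+ 2)).
have M2 : M ^+ 2 = maxS S (fun j => enorm (x i - x j) ^+ 2).
  by rewrite /M sqr_sqrtr // maxS_ge0.
have h1 : maxS S (fun j => dist (x i) (X j)) <= M.
  apply: maxS_le; first exact: sqrtr_ge0.
  move=> j jS; apply: le_trans (@dist_le _ _ (x i) _ _ (hx j)) _.
  have -> : enorm (x i - x j) = Num.sqrt (enorm (x i - x j) ^+ 2).
    by rewrite sqrtr_sqr ger0_norm // enorm_ge0.
  apply: ler_wsqrtr.
  exact: (@le_maxS _ _ S (fun j => enorm (x i - x j) ^+ 2) j jS).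
have h2 := le_trans (key (x i)) h1.
have e0 := @enorm_ge0 _ _ (x i - xstar).
rewrite -M2.
have m0 : 0 <= mu * enorm (x i - xstar) by rewrite mulr_ge0 // ltW.
rewrite -exprMn.
by rewrite lerXn2r // ?nnegrE ?sqrtr_ge0.
Qed.
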